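(* Let $\mathbf A\in\mathbb R^{m\times n}$, $0\le\epsilon<1$, let $0\le s<\mathrm{rank}(\mathbf A)$ be an integer, $t_s=s+\mathrm{sr}_s(\mathbf A)$, and let $k$ be an integer with $s<k<t_s$. Define $\gamma_s(k)=\sqrt{1+\frac{2(k-s)}{t_s-k}}$ and $\Phi_s(k)=\big(1+\frac{s}{k-s}\big)\gamma_s(k)$. Let $\alpha=\frac{\gamma_s(k)\,\mathrm{OPT}_k}{(1-\epsilon)(k-s)}$ and $S\sim\mathrm{DPP}(\frac1\alpha\mathbf A^\top\mathbf A)$. Then \[ \frac{\mathbb E[\mathrm{Er}_{\mathbf A}(S)]}{\mathrm{OPT}_k}\le\frac{\Phi_s(k)}{1-\epsilon}\qquad\text{and}\qquad\mathbb E[|S|]\le k-\epsilon\,\frac{k-s}{\gamma_s(k)}. \]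
   Context: For $\mathbf A\in\mathbb R^{m\times n}$ with columns $\mathbf a_1,\dots,\mathbf a_n$ and $S\subseteq\{1,\dots,n\}$, $\mathbf P_S$ is the orthogonal projection onto $\mathrm{span}\{\mathbf a_i:i\in S\}$, $\mathrm{Er}_{\mathbf A}(S)=\|\mathbf A-\mathbf P_S\mathbf A\|_F^2$, and $\mathrm{OPT}_k=\min_{\mathrm{rank}(\mathbf B)=k}\|\mathbf A-\mathbf B\|_F^2=\sum_{i>k}\lambda_i$ where $\lambda_1\ge\lambda_2\ge\dots$ are the eigenvalues of $\mathbf A^\top\mathbf A$. Stable rank: $\mathrm{sr}_s(\mathbf A)=\lambda_{s+1}^{-1}\sum_{i>s}\lambda_i$. For a p.s.d. $n\times n$ matrix $\mathbf K$, $S\sim\mathrm{DPP}(\mathbf K)$ is the distribution over all subsets $S\subseteq\{1,\dots,n\}$ (of any size) with $\Pr(S)=\det(\mathbf K_{S,S})/\det(\mathbf I+\mathbf K)$, $\mathbf K_{S,S}$ the principal submatrix indexed by $S$ (empty determinant $=1$). *)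

(* Defs.v *)
From HB Require Import structures.
From mathcomp Require Import all_boot all_order all_algebra.
From mathcomp Require Import reals.
Set Implicit Arguments. Unset Strict Implicit. Unset Printing Implicit Defensive.
Import Order.TTheory GRing.Theory Num.Theory.
Local Open Scope ring_scope.

Section Defs.
Variable R : realType.

Definition frob2 {p q : nat} (M : 'M[R]_(p, q)) : R :=
  \sum_(i < p) \sum_(j < q) M i j ^+ 2.

(* the n x m matrix whose rows are the columns a_i (i in S) of A, and 0 otherwise;
   its row space is span{a_i : i in S} *)
Definition cols_mx {m n : nat} (A : 'M[R]_(m, n)) (S : {set 'I_n}) : 'M[R]_(n, m) :=
  \matrix_(i < n) (if i \in S then row i A^T else 0).

(* orthogonal projection (m x m matrix) onto the row space of M:
   B^T (B B^T)^{-1} B, with B a basis (row_base) of that row space *)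
Definition orth_proj {k m : nat} (M : 'M[R]_(k, m)) : 'M[R]_m :=
  let B := row_base M in B^T *m invmx (B *m B^T) *m B.

Definition P_S {m n : nat} (A : 'M[R]_(m, n)) (S : {set 'I_n}) : 'M[R]_m :=
  orth_proj (cols_mx A S).

Definition Er {m n : nat} (A : 'M[R]_(m, n)) (S : {set 'I_n}) : R :=
  frob2 (A - P_S A S *m A).

Definition princ_sub {n : nat} (K : 'M[R]_n) (S : {set 'I_n}) : 'M[R]_(#|S|) :=
  \matrix_(i < #|S|, j < #|S|) K (enum_val i) (enum_val j).

Definition dpp_prob {n : nat} (K : 'M[R]_n) (S : {set 'I_n}) : R :=
  \det (princ_sub K S) / \det (1%:M + K).

Definition dpp_expect {n : nat} (K : 'M[R]_n) (f : {set 'I_n} -> R) : R :=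
  \sum_(S : {set 'I_n}) dpp_prob K S * f S.

(* lam : 'I_n -> R is the nonincreasing list of eigenvalues (with multiplicity)
   of the n x n matrix M; lam 0 = lambda_1, lam i = lambda_{i+1}. *)
Definition sorted_eigenvalues {n : nat} (M : 'M[R]_n) (lam : 'I_n -> R) : Prop :=
  char_poly M = \prod_(i < n) ('X - (lam i)%:P) /\
  (forall i j : 'I_n, (i <= j)%N -> lam j <= lam i).

(* sum_{i > k} lambda_i  (1-based), i.e. sum over 0-based indices i >= k *)
Definition tail_sum {n : nat} (lam : 'I_n -> R) (k : nat) : R :=
  \sum_(i < n | (k <= i)%N) lam i.

Definition OPT {n : nat} (lam : 'I_n -> R) (k : nat) : R := tail_sum lam k.

(* stable rank sr_s = lambda_{s+1}^{-1} sum_{i>s} lambda_i ; lambda_{s+1} = lam (s) 0-based *)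
Definition stable_rank {n : nat} (lam : 'I_n -> R) (s : nat) : R :=
  (\sum_(i < n | (s <= i)%N) lam i) / (\sum_(i < n | i == s :> nat) lam i).

End Defs.

(* Main.v *)
Require Import Defs.
From HB Require Import structures.
From mathcomp Require Import all_boot all_order all_algebra.
From mathcomp Require Import reals.
Import Order.TTheory GRing.Theory Num.Theory.
Local Open Scope ring_scope.
From mathcomp Require Import fingroup perm.
From mathcomp Require Import ring lra.
Import Order.TTheory GRing.Theory Num.Theory.
Local Open Scope ring_scope.

Set Implicit Arguments. Unset Strict Implicit. Unset Printing Implicit Defensive.

Section Gen.
Variable T : comNzRingType.

Lemma split_lshift m n (a : 'I_m) : split (lshift n a) = inl a.
Proof. exact: (unsplitK (inl a)). Qed.
Lemma split_rshift m n (a : 'I_n) : split (rshift m a) = inr a.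
Proof. exact: (unsplitK (inr a)). Qed.

Definition psub {n : nat} (K : 'M[T]_n) (S : {set 'I_n}) : 'M[T]_(#|S|) :=
  \matrix_(i < #|S|, j < #|S|) K (enum_val i) (enum_val j).

Lemma det_reindex m n (E : m = n) (M : 'M[T]_n) (f : 'I_m -> 'I_n) :
  injective f -> \det (\matrix_(a, b) M (f a) (f b)) = \det M.
Proof.
subst m => injf.
have -> : \matrix_(a, b) M (f a) (f b) = row_perm (perm injf) (col_perm (perm injf) M).
  by apply/matrixP => a b; rewrite !mxE !permE.
rewrite row_permE col_permE !det_mulmx !det_perm odd_permV mulrA.
by rewrite mulrC mulrA -signr_addb addbb expr0 mul1r.
Qed.

Lemma det_reindex_sub n (K : 'M[T]_n) (S : {set 'I_n}) p (E : p = #|S|)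
  (f : 'I_p -> 'I_n) (x0 : 'I_n) (Hx0 : x0 \in S) :
  injective f -> (forall a, f a \in S) ->
  \det (psub K S) = \det (\matrix_(a, b) K (f a) (f b)).
Proof.
move=> injf fS.
pose g a := enum_rank_in Hx0 (f a).
have gK a : enum_val (g a) = f a by rewrite enum_rankK_in.
have injg : injective g by move=> a b /(congr1 enum_val); rewrite !gK => /injf.
rewrite -(det_reindex E (psub K S) injg); congr (\det _).
by apply/matrixP => a b; rewrite !mxE !gK.
Qed.

Definition KS n (K : 'M[T]_n) (S : {set 'I_n}) : 'M[T]_n :=
  \matrix_(i, j) (if i \in S then K i j else (i == j)%:R).

Lemma det_KS n (K : 'M[T]_n) (S : {set 'I_n}) : \det (KS K S) = \det (psub K S).
Proof.
pose f (a : 'I_(#|S| + #|~: S|)) : 'I_n :=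
  match split a with inl r => enum_val r | inr r => enum_val r end.
have injf : injective f.
  move=> a b; rewrite /f.
  case: (split_ordP a) => a' ->; case: (split_ordP b) => b' ->;
    rewrite ?split_lshift ?split_rshift // => E.
  - by rewrite (enum_val_inj E).
  - by have := enum_valP a'; have := enum_valP b'; rewrite E inE => /negbTE ->.
  - by have := enum_valP a'; have := enum_valP b'; rewrite E inE => ->.
  - by rewrite (enum_val_inj E).
rewrite -(det_reindex (etrans (cardsC S) (card_ord n)) _ injf).
have -> : \matrix_(a, b) KS K S (f a) (f b) =
   block_mx (psub K S) (\matrix_(a, b) K (enum_val a) (enum_val (b : 'I_#|~:S|))) 0 1%:M.
  apply/matrixP => a b; rewrite /f.
  case: (split_ordP a) => a' ->; case: (split_ordP b) => b' ->;
    rewrite ?block_mxEul ?block_mxEur ?block_mxEdl ?block_mxEdr !mxE ?split_lshift ?split_rshift ?enum_valP //.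
  - have := enum_valP a'; rewrite inE => /negbTE ->.
    case: eqP => // E; have := enum_valP a'; by rewrite E inE enum_valP.
  - have := enum_valP a'; rewrite inE => /negbTE ->.
    by rewrite (inj_eq enum_val_inj).
by rewrite det_ublock det1 mulr1.
Qed.

Lemma prod_if_split (I : finType) (J : {set I}) (a b d : I -> T) :
  \prod_i (if i \in J then a i else b i * d i) =
  (\prod_(i in ~: J) d i) * \prod_i (if i \in J then a i else b i).
Proof.
rewrite (big_mkcond (fun i => i \in ~: J)) -big_split /=; apply: eq_bigr => i _.
by rewrite inE; case: (i \in J) => /=; rewrite ?mul1r // mulrC.
Qed.

Lemma principal_expansion n (K : 'M[T]_n) (d : 'I_n -> T) :
  \det (\matrix_(i, j) ((i == j)%:R * d i + K i j)) =
  \sum_(S : {set 'I_n}) (\prod_(i in ~: S) d i) * \det (psub K S).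
Proof.
transitivity (\sum_(S : {set 'I_n}) (\prod_(i in ~: S) d i) * \det (KS K S)); last first.
  by apply: eq_bigr => S _; rewrite det_KS.
rewrite /determinant.
rewrite [LHS](eq_bigr (fun s : 'S_n => (-1) ^+ s * \sum_(J : {set 'I_n})
   (\prod_(i in ~: J) d i) * \prod_i (if i \in J then K i (s i) else (i == s i)%:R))); last first.
  move=> s _; congr (_ * _).
  rewrite (eq_bigr (fun i => K i (s i) + (i == s i)%:R * d i)); last by move=> i _; rewrite mxE addrC.
  rewrite bigA_distr; apply: eq_bigr => J _; exact: prod_if_split.
under [RHS]eq_bigr => S _ do rewrite big_distrr.
rewrite exchange_big /=; apply: eq_bigr => s _.
rewrite big_distrr /=; apply: eq_bigr => S _.
rewrite mulrCA; congr (_ * (_ * _)); apply: eq_bigr => i _; by rewrite mxE.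
Qed.

End Gen.

Lemma det_schur (U : comUnitRingType) p q (G : 'M[U]_p) (g : 'M[U]_(p, q)) (h : 'M[U]_(q, p)) (k : 'M[U]_q) :
  G \in unitmx ->
  \det (block_mx G g h k) = \det G * \det (k - h *m invmx G *m g).
Proof.
move=> uG.
have -> : block_mx G g h k = block_mx 1%:M 0 (h *m invmx G) 1%:M *m
                             block_mx G g 0 (k - h *m invmx G *m g).
  rewrite mulmx_block !mul1mx !mul0mx !addr0 ?mulmx1 mulmxKV //.
  by rewrite addrC subrK.
by rewrite det_mulmx det_lblock det_ublock !det1 !mul1r.
Qed.

Section Real.
Variable R : realType.

Lemma trmxB' m n (M N : 'M[R]_(m, n)) : (M - N)^T = M^T - N^T.
Proof. by apply/matrixP => i j; rewrite !mxE. Qed.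

Lemma sq_row0 m (w : 'rV[R]_m) : (w *m w^T) 0 0 = 0 -> w = 0.
Proof.
rewrite mxE => H; apply/rowP => l; rewrite mxE.
have H0 : forall j, predT j -> 0 <= w 0 j * w^T j 0.
  by move=> j _; rewrite mxE (sqr_ge0 _ : 0 <= _ * _).
have := psumr_eq0P H0 H (isT : predT l).
rewrite mxE => /eqP; rewrite mulf_eq0 orbb => /eqP //.
Qed.

Lemma sq_row_ge0 m (w : 'rV[R]_m) : 0 <= (w *m w^T) 0 0.
Proof. rewrite mxE; apply: sumr_ge0 => l _; by rewrite mxE (sqr_ge0 _ : 0 <= _ * _). Qed.

Lemma gram_unit p m (X : 'M[R]_(p, m)) : row_free X -> X *m X^T \in unitmx.
Proof.
move=> fX; rewrite unitmxE unitfE; apply/negP => /det0P [v vn0 Hv].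
have : (v *m X) *m (v *m X)^T = 0.
  by rewrite trmx_mul !mulmxA -(mulmxA v) Hv !mul0mx.
move=> H0; have : (v *m X *m (v *m X)^T) 0 0 = 0 by rewrite H0 mxE.
move=> /sq_row0 /eqP.
by rewrite mulmx_free_eq0 // (negbTE vn0).
Qed.

Definition Qm p m (X : 'M[R]_(p, m)) : 'M[R]_m := X^T *m invmx (X *m X^T) *m X.

Lemma Q_sub p q m (X : 'M[R]_(p, m)) (Y : 'M[R]_(q, m)) :
  X *m X^T \in unitmx -> (Y <= X)%MS -> Y *m Qm X = Y.
Proof.
move=> uX /submxP [D ->]; rewrite /Qm !mulmxA -(mulmxA D X X^T) mulmxK //.
Qed.

Lemma Q_tr p m (X : 'M[R]_(p, m)) : (Qm X)^T = Qm X.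
Proof. by rewrite /Qm !trmx_mul trmx_inv trmx_mul !trmxK mulmxA. Qed.

Lemma Q_idem p m (X : 'M[R]_(p, m)) : X *m X^T \in unitmx -> Qm X *m Qm X = Qm X.
Proof.
move=> uX; have H := Q_sub uX (submx_refl X).
transitivity (X^T *m invmx (X *m X^T) *m (X *m Qm X)); first by rewrite /Qm !mulmxA.
by rewrite H.
Qed.

Lemma Q_eq p q m (X : 'M[R]_(p, m)) (Y : 'M[R]_(q, m)) :
  X *m X^T \in unitmx -> Y *m Y^T \in unitmx -> (Y <= X)%MS -> (X <= Y)%MS ->
  Qm X = Qm Y.
Proof.
move=> uX uY YX XY.
have E1 : Qm Y *m Qm X = Qm Y.
  transitivity (Y^T *m invmx (Y *m Y^T) *m (Y *m Qm X)); first by rewrite /Qm !mulmxA.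
  by rewrite (Q_sub uX YX).
have E2 : Qm X *m Qm Y = Qm X.
  transitivity (X^T *m invmx (X *m X^T) *m (X *m Qm Y)); first by rewrite /Qm !mulmxA.
  by rewrite (Q_sub uY XY).
by rewrite -E1 -[Qm Y]Q_tr -[Qm X]Q_tr -trmx_mul E2 Q_tr.
Qed.

Lemma orth_proj_Q p m k (X : 'M[R]_(p, m)) (M : 'M[R]_(k, m)) :
  X *m X^T \in unitmx -> (X <= M)%MS -> (M <= X)%MS -> orth_proj M = Qm X.
Proof.
move=> uX XM MX; rewrite /orth_proj -/(Qm (row_base M)).
apply: Q_eq; first exact: gram_unit (row_base_free M).
- exact: uX.
- by rewrite eq_row_base.
- by rewrite eq_row_base.
Qed.

Definition Bm m n p (A : 'M[R]_(m, n)) (g : 'I_p -> 'I_n) : 'M[R]_(p, m) :=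
  \matrix_(a, l) A l (g a).

Lemma row_Bm m n p (A : 'M[R]_(m, n)) (g : 'I_p -> 'I_n) a :
  row a (Bm A g) = row (g a) A^T.
Proof. by apply/rowP => l; rewrite !mxE. Qed.

Definition BS m n (A : 'M[R]_(m, n)) (S : {set 'I_n}) : 'M[R]_(#|S|, m) :=
  Bm A (fun a : 'I_#|S| => enum_val a).

Lemma BS_cols1 m n (A : 'M[R]_(m, n)) (S : {set 'I_n}) : (BS A S <= cols_mx A S)%MS.
Proof.
apply/row_subP => a; rewrite row_Bm.
have -> : row (enum_val a) A^T = row (enum_val a) (cols_mx A S).
  by rewrite /cols_mx rowK enum_valP.
exact: row_sub.
Qed.

Lemma BS_cols2 m n (A : 'M[R]_(m, n)) (S : {set 'I_n}) : (cols_mx A S <= BS A S)%MS.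
Proof.
apply/row_subP => i; rewrite /cols_mx rowK; case: ifP => iS; last by rewrite sub0mx.
have -> : row i A^T = row (enum_rank_in iS i) (BS A S) by rewrite row_Bm enum_rankK_in.
exact: row_sub.
Qed.

Lemma frob2_rows m n (N : 'M[R]_(m, n)) :
  frob2 N = \sum_(j < n) (row j N^T *m (row j N^T)^T) 0 0.
Proof.
rewrite /frob2 exchange_big; apply: eq_bigr => j _; rewrite mxE.
by apply: eq_bigr => l _; rewrite !mxE expr2.
Qed.

Definition rho m n (A : 'M[R]_(m, n)) (Q : 'M[R]_m) (j : 'I_n) : R :=
  (row j A^T *m (1%:M - Q) *m (row j A^T)^T) 0 0.

Lemma Er_rho m n (A : 'M[R]_(m, n)) (S : {set 'I_n}) :
  BS A S *m (BS A S)^T \in unitmx ->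
  Er A S = \sum_j rho A (Qm (BS A S)) j.
Proof.
move=> uB; rewrite /Er /P_S (orth_proj_Q uB (BS_cols1 A S) (BS_cols2 A S)).
set Q := Qm (BS A S).
rewrite frob2_rows; apply: eq_bigr => j _.
have -> : (A - Q *m A)^T = A^T *m (1%:M - Q).
  by rewrite trmxB' trmx_mul Q_tr mulmxBr mulmx1.
rewrite row_mul /rho trmx_mul -!mulmxA; congr ((_ *m _) 0 0).
rewrite mulmxA; congr (_ *m _).
rewrite trmxB' trmx1 Q_tr mulmxBr mulmx1 mulmxBl mul1mx Q_idem //.
by rewrite subrr subr0.
Qed.

Lemma rho_in m n (A : 'M[R]_(m, n)) (S : {set 'I_n}) j :
  BS A S *m (BS A S)^T \in unitmx -> j \in S -> rho A (Qm (BS A S)) j = 0.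
Proof.
move=> uB jS; rewrite /rho mulmxBr mulmx1.
have -> : row j A^T *m Qm (BS A S) = row j A^T.
  apply: Q_sub => //.
  have -> : row j A^T = row (enum_rank_in jS j) (BS A S) by rewrite row_Bm enum_rankK_in.
  exact: row_sub.
by rewrite subrr mul0mx mxE.
Qed.

End Real.

Section Real3.
Variable R : realType.
Variables (m n : nat) (A : 'M[R]_(m, n)) (c : R).
Let K := c *: (A^T *m A).

Lemma K_Bm p (g : 'I_p -> 'I_n) :
  \matrix_(a, b) K (g a) (g b) = c *: (Bm A g *m (Bm A g)^T).
Proof.
apply/matrixP => a b; rewrite !mxE /K; congr (_ * _).
by apply: eq_bigr => l _; rewrite !mxE.
Qed.

Lemma psub_K (S : {set 'I_n}) : psub K S = c *: (BS A S *m (BS A S)^T).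
Proof. rewrite -K_Bm; apply/matrixP => a b; by rewrite !mxE. Qed.

Lemma det_psub_U (S : {set 'I_n}) i : i \notin S ->
  \det (psub K (i |: S)) =
  c ^+ (#|S| + 1) * \det (col_mx (BS A S) (row i A^T) *m (col_mx (BS A S) (row i A^T))^T).
Proof.
move=> iS.
have E : (#|S| + 1 = #|i |: S|)%N by rewrite cardsU1 iS addnC.
pose f (a : 'I_(#|S| + 1)) : 'I_n :=
  match split a with inl r => enum_val r | inr _ => i end.
have injf : injective f.
  move=> a b; rewrite /f.
  case: (split_ordP a) => a' ->; case: (split_ordP b) => b' ->;
    rewrite ?split_lshift ?split_rshift // => E'.
  - by rewrite (enum_val_inj E').
  - by move: iS; rewrite -E' enum_valP.
  - by move: iS; rewrite E' enum_valP.
  - by rewrite !ord1.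
have fT a : f a \in i |: S.
  rewrite /f; case: (split_ordP a) => a' _.
  - by rewrite in_setU1 enum_valP orbT.
  - exact: setU11.
rewrite (det_reindex_sub K E (setU11 i S) injf fT) K_Bm detZ.
have -> : Bm A f = col_mx (BS A S) (row i A^T).
  apply/matrixP => a l; rewrite /f; case: (split_ordP a) => a' ->;
  by rewrite ?col_mxEu ?col_mxEd !mxE ?split_lshift ?split_rshift.
by [].
Qed.

Lemma schur_step (S : {set 'I_n}) i : i \notin S ->
  BS A S *m (BS A S)^T \in unitmx ->
  \det (psub K (i |: S)) = c * \det (psub K S) * rho A (Qm (BS A S)) i.
Proof.
move=> iS uB; rewrite det_psub_U // psub_K detZ.
rewrite tr_col_mx mul_col_row det_schur // det_mx11.
have -> : (row i A^T *m (row i A^T)^T -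
    row i A^T *m (BS A S)^T *m invmx (BS A S *m (BS A S)^T) *m (BS A S *m (row i A^T)^T)) 0 0
    = rho A (Qm (BS A S)) i.
  by rewrite /rho /Qm mulmxBr mulmx1 mulmxBl !mulmxA.
rewrite exprD expr1; ring.
Qed.

Lemma schur_step0 (S : {set 'I_n}) i : i \notin S ->
  BS A S *m (BS A S)^T \notin unitmx ->
  \det (psub K (i |: S)) = 0 /\ \det (psub K S) = 0.
Proof.
move=> iS uB; split; last first.
  by move: uB; rewrite psub_K detZ unitmxE unitfE negbK => /eqP ->; rewrite mulr0.
rewrite det_psub_U //.
suff /eqP -> : \det (col_mx (BS A S) (row i A^T) *m (col_mx (BS A S) (row i A^T))^T) == 0.
  by rewrite mulr0.
suff: (col_mx (BS A S) (row i A^T) *m (col_mx (BS A S) (row i A^T))^T) \notin unitmx.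
  by rewrite unitmxE unitfE negbK.
rewrite -row_free_unit /row_free.
have fB : ~~ row_free (BS A S) by apply: contra uB; exact: gram_unit.
rewrite neq_ltn; apply/orP; left.
apply: (leq_ltn_trans (mxrankM_maxl _ _)).
rewrite -addsmxE.
apply: (leq_ltn_trans (mxrank_adds_leqif _ _).1).
have := rank_leq_row (row i A^T); have := rank_leq_row (BS A S).
move: fB; rewrite /row_free => fB.
rewrite leq_eqVlt (negbTE fB) /= => h1 h2.
by rewrite -addSn leq_add.
Qed.

Lemma per_S (S : {set 'I_n}) :
  c * \det (psub K S) * Er A S = \sum_(i | i \notin S) \det (psub K (i |: S)).
Proof.
case: (boolP (BS A S *m (BS A S)^T \in unitmx)) => uB.
  rewrite Er_rho // (bigID (fun j => j \in S)) /= big1 ?add0r; last first.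
    by move=> j jS; rewrite rho_in.
  rewrite mulr_sumr; apply: eq_bigr => i iS; by rewrite schur_step.
have d0 : \det (psub K S) = 0.
  by move: uB; rewrite psub_K detZ unitmxE unitfE negbK => /eqP ->; rewrite mulr0.
rewrite d0 mulr0 mul0r big1 // => i iS; exact: (schur_step0 iS uB).1.
Qed.

End Real3.

Lemma comb_sum (R : realType) n (F : {set 'I_n} -> R) :
  \sum_(S : {set 'I_n}) \sum_(i | i \notin S) F (i |: S) =
  \sum_(S : {set 'I_n}) #|S|%:R * F S.
Proof.
transitivity (\sum_(S : {set 'I_n}) \sum_i (if i \notin S then F (i |: S) else 0)).
  by apply: eq_bigr => S _; rewrite big_mkcond.
transitivity (\sum_(S : {set 'I_n}) \sum_i (if i \in S then F S else 0)); last first.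
  apply: eq_bigr => S _; rewrite -big_mkcond /= sumr_const.
  by rewrite mulr_natl.
rewrite exchange_big [RHS]exchange_big; apply: eq_bigr => i _.
rewrite -!big_mkcond /=.
rewrite [RHS](reindex_onto (fun S => i |: S) (fun T => T :\ i)) /=; last first.
  by move=> T iT; rewrite setD1K.
apply: eq_bigl => S; rewrite setU11 /=.
apply/idP/eqP => [iS | <-]; first by rewrite setU1K.
by rewrite setD11.
Qed.


Section Poly.
Variable R : realType.

Lemma eval_charpoly n (N : 'M[R]_n) y : (char_poly N).[y] = \det (y%:M - N).
Proof.
rewrite /char_poly -horner_evalE -det_map_mx; congr (\det _).
apply/matrixP => i j; rewrite !mxE /horner_eval.
change ((('X *+ (i == j) - (N i j)%:P).[y]) = y *+ (i == j) - N i j).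
by rewrite hornerD hornerN hornerMn hornerX hornerC.
Qed.

Lemma poly_eq_eval (P Q : {poly R}) : (forall x, P.[x] = Q.[x]) -> P = Q.
Proof.
move=> H; apply/eqP; rewrite -subr_eq0; apply/eqP.
apply: (@roots_geq_poly_eq0 _ _ [seq (k%:R : R) | k <- iota 0 (size (P - Q))]).
- by apply/allP => z /mapP [k _ ->]; rewrite rootE hornerD hornerN H subrr.
- rewrite map_inj_uniq ?iota_uniq // => a b /eqP; rewrite eqr_nat => /eqP //.
- by rewrite size_map size_iota.
Qed.

Lemma deriv_prod_eval (I : Type) (r : seq I) (f : I -> R) x :
  (forall i, x + f i != 0) ->
  (\prod_(i <- r) ('X + (f i)%:P))^`().[x] =
  (\prod_(i <- r) (x + f i)) * \sum_(i <- r) (x + f i)^-1.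
Proof.
move=> nz; elim: r => [|a r IH]; first by rewrite !big_nil derivC hornerC mul1r.
rewrite !big_cons derivM derivD derivX derivC addr0 mul1r hornerD hornerM IH.
rewrite horner_prod hornerD hornerX hornerC.
have := nz a; set u := x + f a => nu.
under eq_bigr do rewrite hornerD hornerX hornerC.
by field.
Qed.

Variables (n : nat) (M : 'M[R]_n) (lam : 'I_n -> R) (c : R).
Hypothesis Hchar : char_poly M = \prod_(i < n) ('X - (lam i)%:P).
Hypothesis Hc : c != 0.
Let K := c *: M.

Lemma det_xK x : \det (\matrix_(i, j) ((i == j)%:R * x + K i j)) = \prod_i (x + c * lam i).
Proof.
have -> : \matrix_(i, j) ((i == j)%:R * x + K i j) = (- c) *: ((- x / c)%:M - M).
  apply/matrixP => i j; rewrite !mxE /K.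
  case: (i == j); rewrite /= ?mulr1n ?mulr0n ?mul1r ?mul0r; field => //.
rewrite detZ -eval_charpoly Hchar horner_prod.
have -> : (- c) ^+ n = (- c) ^+ #|'I_n| by rewrite card_ord.
rewrite -prodrMl; apply: eq_bigr => i _.
rewrite hornerXsubC; field; exact: Hc.
Qed.

Lemma sum_psub x : \sum_(S : {set 'I_n}) x ^+ #|~: S| * \det (psub K S) = \prod_i (x + c * lam i).
Proof.
rewrite -det_xK principal_expansion; apply: eq_bigr => S _.
by rewrite prodr_const.
Qed.

Lemma Z_eq : \det (1%:M + K) = \sum_(S : {set 'I_n}) \det (psub K S).
Proof.
have -> : 1%:M + K = \matrix_(i, j) ((i == j)%:R * 1 + K i j).
  by apply/matrixP => i j; rewrite !mxE mulr1.
rewrite principal_expansion; apply: eq_bigr => S _.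
by rewrite prodr_const expr1n mul1r.
Qed.

Lemma Z_prod : \det (1%:M + K) = \prod_i (1 + c * lam i).
Proof.
rewrite Z_eq -sum_psub; apply: eq_bigr => S _; by rewrite expr1n mul1r.
Qed.

Hypothesis Hpos : forall i, 1 + c * lam i != 0.

Lemma sum_card :
  \sum_(S : {set 'I_n}) \det (psub K S) * #|S|%:R =
  (\prod_i (1 + c * lam i)) * \sum_i (c * lam i) / (1 + c * lam i).
Proof.
pose Pp := \sum_(S : {set 'I_n}) (\det (psub K S))%:P * 'X^#|~: S|.
pose Qp := \prod_(i < n) ('X + (c * lam i)%:P).
have PQ : Pp = Qp.
  apply: poly_eq_eval => x; rewrite /Pp /Qp horner_sum horner_prod.
  under [RHS]eq_bigr do rewrite hornerD hornerX hornerC.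
  rewrite -sum_psub; apply: eq_bigr => S _; by rewrite hornerM hornerC hornerXn mulrC.
have dP : Pp^`().[1] = \sum_(S : {set 'I_n}) \det (psub K S) * #|~: S|%:R.
  rewrite /Pp raddf_sum horner_sum; apply: eq_bigr => S _.
  change ((((\det (psub K S))%:P * 'X^#|~: S|)^`()).[1] = \det (psub K S) * #|~: S|%:R).
  rewrite derivM derivC mul0r add0r derivXn hornerM hornerC hornerMn hornerXn expr1n.
  by rewrite mulr_natr.
have dQ : Qp^`().[1] = (\prod_i (1 + c * lam i)) * \sum_i (1 + c * lam i)^-1.
  exact: deriv_prod_eval.
have E : \sum_(S : {set 'I_n}) \det (psub K S) * #|~: S|%:R =
         (\prod_i (1 + c * lam i)) * \sum_i (1 + c * lam i)^-1 by rewrite -dP -dQ PQ.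
have E2 : forall S : {set 'I_n}, (#|S|%:R : R) = n%:R - #|~: S|%:R.
  by move=> S; apply/eqP; rewrite eq_sym subr_eq -natrD cardsC card_ord.
rewrite (eq_bigr (fun S : {set 'I_n} => \det (psub K S) * n%:R - \det (psub K S) * #|~: S|%:R)); last by move=> S _; rewrite E2 mulrBr.
rewrite sumrB E -mulr_suml -Z_eq Z_prod -mulrBr; congr (_ * _).
have -> : (n%:R : R) = \sum_(i < n) 1 by rewrite sumr_const card_ord.
rewrite -sumrB; apply: eq_bigr => i _.
by field; exact: Hpos i.
Qed.

End Poly.

Lemma card_range n (P : pred 'I_n) lo hi :
  (forall i, P i -> lo <= i < hi)%N -> (#|P| <= hi - lo)%N.
Proof.
move=> HP; rewrite cardE -(size_map val) -(size_iota lo (hi - lo)).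
apply: uniq_leq_size; first by rewrite map_inj_uniq ?enum_uniq //; exact: val_inj.
move=> x /mapP [i]; rewrite mem_enum => /HP /andP [h1 h2] ->.
rewrite mem_iota h1 /= subnKC //; exact: leq_trans (ltnW h2).
Qed.

Lemma sum_range (R : realType) n (P : pred 'I_n) lo hi (f : 'I_n -> R) b :
  (forall i, P i -> lo <= i < hi)%N -> 0 <= b -> (forall i, P i -> f i <= b) ->
  \sum_(i | P i) f i <= (hi - lo)%:R * b.
Proof.
move=> HP b0 Hf; apply: le_trans (_ : \sum_(i | P i) b <= _).
  by apply: ler_sum => i Pi; exact: Hf.
rewrite sumr_const -[b *+ _]mulr_natl; apply: (ler_wpM2r b0).
by rewrite ler_nat; apply: card_range.
Qed.

Lemma eig_ge0 (R : realType) m n (A : 'M[R]_(m, n)) (lam : 'I_n -> R) :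
  char_poly (A^T *m A) = \prod_(i < n) ('X - (lam i)%:P) -> forall i, 0 <= lam i.
Proof.
move=> Hc i.
have : eigenvalue (A^T *m A) (lam i).
  rewrite eigenvalue_root_char Hc rootE horner_prod (bigD1 i) //=.
  by rewrite hornerXsubC subrr mul0r.
move/eigenvalueP => [v Hv vn0].
have E : (v *m A^T) *m (v *m A^T)^T = lam i *: (v *m v^T).
  by rewrite trmx_mul trmxK !mulmxA -(mulmxA v) Hv scalemxAl.
have : ((v *m A^T) *m (v *m A^T)^T) 0 0 = lam i * (v *m v^T) 0 0.
  by rewrite E mxE.
have pos : 0 < (v *m v^T) 0 0.
  rewrite lt_def sq_row_ge0 andbT; apply/negP => /eqP /sq_row0 H.
  by rewrite H eqxx in vn0.
have := sq_row_ge0 (v *m A^T) => h1 h2.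
rewrite h2 in h1; by rewrite (pmulr_lge0 _ pos) in h1.
Qed.

Lemma key_ineq (R : realType) (d tk lam O e g al : R) :
  0 < d -> 0 < tk -> 0 < lam -> lam * tk <= O -> 0 <= e -> e < 1 -> 0 <= g ->
  g ^+ 2 = 1 + 2 * d / tk -> al = g * O / ((1 - e) * d) ->
  d * ((al^-1 * lam) / (1 + al^-1 * lam)) + al^-1 * O <= d - e * d / g.
Proof.
move=> d0 tk0 l0 lO e0 e1 g0 g2 alE.
set x := d / tk.
have xtk : x * tk = d by rewrite /x mulrVK // unitfE gt_eqF.
have x0 : 0 < x by rewrite /x divr_gt0.
have g2' : g * g = 1 + 2 * x by rewrite -expr2 g2 /x mulrA.
have g1 : 1 <= g by nra.
have gx : g <= 1 + x by nra.
have O0 : 0 < O by nra.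
have gp : 0 < g by lra.
have al0 : 0 < al by rewrite alE divr_gt0 ?mulr_gt0 // subr_gt0.
have alE' : al * ((1 - e) * d) = g * O.
  by rewrite alE mulrVK // unitfE gt_eqF // mulr_gt0 // subr_gt0.
have ai : al^-1 * O = (1 - e) * (d / g).
  have e' : 1 - e != 0 by rewrite gt_eqF // subr_gt0.
  rewrite alE; field; rewrite e' !gt_eqF //.
have bE : al^-1 * lam / (1 + al^-1 * lam) = lam / (al + lam).
  by field; rewrite ?gt_eqF //; lra.
rewrite bE ai.
set u := lam / (al + lam); set v := d / g.
have hu : u * (al + lam) = lam by rewrite /u mulfVK // gt_eqF //; lra.
have hv : v * g = d by rewrite /v mulfVK // gt_eqF.
have ade : 0 <= al * d * e by rewrite mulr_ge0 // mulr_ge0 // ltW.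
have ald : g * O <= al * d by nra.
have key : lam <= (g - 1) * al by nra.
have ug : u * g <= g - 1 by nra.
have -> : e * d / g = e * v by rewrite /v mulrA.
nra.
Qed.

Lemma frac_mono (R : realType) (u v : R) : 0 <= u -> u <= v -> u / (1 + u) <= v / (1 + v).
Proof.
move=> u0 uv; rewrite -subr_ge0.
have h1 : 1 + u != 0 by rewrite gt_eqF //; lra.
have h2 : 1 + v != 0 by rewrite gt_eqF //; lra.
have -> : v / (1 + v) - u / (1 + u) = (v - u) / ((1 + u) * (1 + v)) by field; rewrite h1 h2.
by rewrite divr_ge0 // ?subr_ge0 // mulr_ge0 //; lra.
Qed.

Lemma frac_le (R : realType) (u : R) : 0 <= u -> u / (1 + u) <= 1 /\ u / (1 + u) <= u.
Proof.
move=> u0; have h : 0 < 1 + u by lra.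
rewrite !ler_pdivrMr // mul1r; split; first lra.
nra.
Qed.

Unset Implicit Arguments. Set Strict Implicit. Set Printing Implicit Defensive.

Theorem lemma1 (R : realType) (m n : nat) (A : 'M[R]_(m, n))
  (lam : 'I_n -> R) (Hlam : sorted_eigenvalues (A^T *m A) lam)
  (eps : R) (Heps0 : 0 <= eps) (Heps1 : eps < 1)
  (s : nat) (Hs : (s < \rank A)%N)
  (k : nat) (Hsk : (s < k)%N)
  (Hkt : k%:R < s%:R + stable_rank lam s) :
  let t := s%:R + stable_rank lam s in
  let gamma := Num.sqrt (1 + 2 * (k%:R - s%:R) / (t - k%:R)) in
  let Phi := (1 + s%:R / (k%:R - s%:R)) * gamma in
  let alpha := gamma * OPT lam k / ((1 - eps) * (k%:R - s%:R)) in
  let K := alpha^-1 *: (A^T *m A) in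
  dpp_expect K (Er A) / OPT lam k <= Phi / (1 - eps) /\
  dpp_expect K (fun S => (#|S|)%:R) <= k%:R - eps * (k%:R - s%:R) / gamma.
Proof.
move=> t gamma Phi alpha K.
case: Hlam => Hchar Hsort.
have lam0 := eig_ge0 Hchar.
have sn : (s < n)%N := leq_trans Hs (rank_leq_col A).
pose s0 : 'I_n := Ordinal sn.
set l := lam s0.
set T := \sum_(i < n | (s <= i)%N) lam i.
have srE : stable_rank lam s = T / l.
  by rewrite /stable_rank [X in _ / X](big_pred1 s0).
have l0 : 0 < l.
  rewrite lt_def lam0 andbT; apply/eqP => l0.
  move: Hkt; rewrite srE l0 invr0 mulr0 addr0 ltr_nat => Hks.
  by move: (ltn_trans Hsk Hks); rewrite ltnn.
set O := OPT lam k.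
set d := k%:R - s%:R.
have dE : ((k - s)%:R : R) = d by rewrite natrB // ltnW.
have d0 : 0 < d by rewrite /d subr_gt0 ltr_nat.
have TO : T = \sum_(i < n | (s <= i < k)%N) lam i + O.
  rewrite /T (bigID (fun i : 'I_n => (i < k)%N)) /=; congr (_ + _).
  rewrite /O /OPT /tail_sum; apply: eq_bigl => i.
  rewrite -leqNgt; apply/idP/idP => [/andP [] //| h].
  by rewrite h andbT (leq_trans (ltnW Hsk) h).
have Mle : \sum_(i < n | (s <= i < k)%N) lam i <= d * l.
  rewrite -dE; apply: sum_range => //; first exact: ltW.
  by move=> i /andP [h _]; apply: Hsort.
set tk := t - k%:R.
have tk0 : 0 < tk by rewrite /tk subr_gt0.
have lO : l * tk <= O.
  have : l * tk = T - d * l.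
    rewrite /tk /t srE /d; field; by rewrite gt_eqF.
  move=> ->; rewrite TO; lra.
have O0 : 0 < O by nra.
have g0 : 0 <= gamma by exact: sqrtr_ge0.
have h2 : 0 <= 2 * d / tk by rewrite divr_ge0 ?mulr_ge0 ?ltW.
have g2 : gamma ^+ 2 = 1 + 2 * d / tk.
  have h : 0 <= 2 * d / tk by rewrite divr_ge0 ?mulr_ge0 ?ltW.
  rewrite sqr_sqrtr // -/d -/tk; lra.
have gp : 0 < gamma.
  have h : 0 <= 2 * d / tk by rewrite divr_ge0 ?mulr_ge0 ?ltW.
  rewrite lt_def g0 andbT; apply/eqP => gE; move: g2; rewrite gE expr0n /=.
  lra.
have al0 : 0 < alpha.
  by rewrite /alpha divr_gt0 ?mulr_gt0 // subr_gt0.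
set c := alpha^-1.
have c0 : 0 < c by rewrite invr_gt0.
have Hpos : forall i, 1 + c * lam i != 0.
  by move=> i; rewrite gt_eqF // ltr_wpDr // mulr_ge0 // ltW.
have Zp : 0 < \prod_(i < n) (1 + c * lam i).
  by apply: prodr_gt0 => i _; rewrite ltr_wpDr // mulr_ge0 // ltW.
have ZE : \det (1%:M + K) = \prod_(i < n) (1 + c * lam i) := Z_prod Hchar (lt0r_neq0 c0).
have ESE : dpp_expect K (fun S => (#|S|)%:R) = \sum_i (c * lam i) / (1 + c * lam i).
  rewrite /dpp_expect /dpp_prob.
  under eq_bigr do rewrite mulrAC.
  rewrite -mulr_suml.
  have -> : \sum_(S : {set 'I_n}) \det (princ_sub K S) * #|S|%:R =
            \sum_(S : {set 'I_n}) \det (psub K S) * #|S|%:R by [].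
  rewrite (sum_card Hchar (lt0r_neq0 c0) Hpos) ZE mulrC mulKf //; exact: lt0r_neq0.
have ESle : dpp_expect K (fun S => (#|S|)%:R) <= k%:R - eps * d / gamma.
  rewrite ESE (bigID (fun i : 'I_n => (i < s)%N)) /=.
  rewrite [X in _ + X](bigID (fun i : 'I_n => (i < k)%N)) /=.
  set b := c * l / (1 + c * l).
  have cl : 0 <= c * l by rewrite mulr_ge0 ?ltW.
  have b0 : 0 <= b by rewrite /b divr_ge0 //; lra.
  have s1 : \sum_(i < n | (i < s)%N) c * lam i / (1 + c * lam i) <= s%:R.
    have := @sum_range R n (fun i : 'I_n => (i < s)%N) 0 s (fun i => c * lam i / (1 + c * lam i)) 1.
    rewrite subn0 mulr1; apply => //.
    move=> i _; have [h _] := @frac_le R (c * lam i) (mulr_ge0 (ltW c0) (lam0 i)); exact: h.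
  have s2 : \sum_(i < n | ~~ (i < s)%N && (i < k)%N) c * lam i / (1 + c * lam i) <= d * b.
    rewrite -dE; apply: sum_range => //.
      by move=> i /andP []; rewrite -leqNgt => -> ->.
    move=> i /andP [h1 _]; rewrite -leqNgt in h1.
    have li : lam i <= l by apply: Hsort.
    rewrite /b; apply: frac_mono; first exact: mulr_ge0 (ltW c0) (lam0 i).
    by rewrite ler_pM2l.
  have s3 : \sum_(i < n | ~~ (i < s)%N && ~~ (i < k)%N) c * lam i / (1 + c * lam i) <= c * O.
    rewrite /O /OPT /tail_sum mulr_sumr.
    have -> : \sum_(i < n | (k <= i)%N) c * lam i =
              \sum_(i < n | ~~ (i < s)%N && ~~ (i < k)%N) c * lam i.
      apply: eq_bigl => i; rewrite -!leqNgt; apply/idP/idP => [h|/andP [] //].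
      by rewrite h andbT (leq_trans (ltnW Hsk) h).
    apply: ler_sum => i _.
    have [_ h] := @frac_le R (c * lam i) (mulr_ge0 (ltW c0) (lam0 i)); exact: h.
  have := key_ineq d0 tk0 l0 lO Heps0 Heps1 g0 g2 (erefl alpha).
  rewrite -/c -/b => h.
  have : k%:R = s%:R + d :> R by rewrite /d addrC subrK.
  lra.
split; last exact: ESle.
have EEr : dpp_expect K (Er A) = alpha * dpp_expect K (fun S => (#|S|)%:R).
  rewrite /dpp_expect /dpp_prob.
  have H1 : forall S : {set 'I_n}, \det (princ_sub K S) * Er A S =
       alpha * \sum_(i | i \notin S) \det (psub K (i |: S)).
    move=> S; rewrite -(per_S A c S) -/K mulrA mulrA mulfV ?mul1r //; exact: lt0r_neq0.
  transitivity ((\det (1%:M + K))^-1 * \sum_(S : {set 'I_n}) \det (princ_sub K S) * Er A S).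
    rewrite mulr_sumr; apply: eq_bigr => S _; by rewrite [\det _ / _]mulrC -mulrA.
  transitivity (alpha * ((\det (1%:M + K))^-1 * \sum_(S : {set 'I_n}) \det (princ_sub K S) * #|S|%:R)); last first.
    congr (_ * _); rewrite mulr_sumr; apply: eq_bigr => S _; by rewrite [\det _ / _]mulrC -mulrA.
  rewrite mulrCA; congr (_ * _).
  under eq_bigr do rewrite H1.
  rewrite -mulr_sumr (comb_sum (fun S => \det (psub K S))); congr (_ * _).
  by apply: eq_bigr => S _; rewrite mulrC.
rewrite EEr.
set E := dpp_expect K (fun S => (#|S|)%:R).
have Ek : E <= k%:R.
  have : 0 <= eps * d / gamma by rewrite divr_ge0 ?mulr_ge0 // ltW.
  move: ESle; rewrite -/E -/d; lra.
have PhiE : alpha * k%:R / O = Phi / (1 - eps).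
  rewrite /alpha /Phi -/d -/O.
  have -> : k%:R = s%:R + d :> R by rewrite /d addrC subrK.
  have e' : 1 - eps != 0 by rewrite lt0r_neq0 // subr_gt0.
  by field; rewrite e' !lt0r_neq0.
rewrite -PhiE ler_pM2r ?invr_gt0 // ler_pM2l //.
Qed.
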